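(* Let $x=(x_1,\dots,x_n)\in B^n$ and suppose that its expansion under the multiplicative Selmer algorithm $S$ eventually becomes periodic, i.e. there are $m\geq 0$, $p\geq 1$ with $S^{m+p}x=S^mx$. Then \begin{equation*} \lim_{s\to\infty}\left(\frac{B_1^{(s)}}{B_0^{(s)}},\dots,\frac{B_n^{(s)}}{B_0^{(s)}}\right)=x. \end{equation*} Thus the periodic multiplicative algorithm of Selmer is weakly convergent and even uniformly weakly convergent, i.e. for every column index $g$, $0\leq g\leq n$, the ratios $\left(\frac{B^{(s)}_{1g}}{B^{(s)}_{0g}},\dots,\frac{B^{(s)}_{ng}}{B^{(s)}_{0g}}\right)$ of the entries of $\beta^{(s)}$ converge to $x$ as $s\to\infty$.
   Context: Let $B^n:=\{(x_1,\dots,x_n):\,1\geq x_1\geq\dots\geq x_n\geq 0\}$. The multiplicative Selmer algorithm (MSA) is the map $S\colon B^n\to B^n$, \begin{equation*} S(x_1,\dots,x_n)=\left(\frac{x_2}{x_1},\dots,\frac{x_n}{x_1},\frac{1-kx_n}{x_1}\right),\qquad k=k(x):=\left[x_n^{-1}\right], \end{equation*} with digit set $\mathbb{N}$ and cells $B(k)=\{x\in B^n:\frac{1}{k+1}<x_n\leq\frac1k\}$. The digits of $x$ are $k_i=k(S^{i-1}x)$, $i\geq 1$. To the digit $k$ one associates the $(n+1)\times(n+1)$-matrix $\beta(k)$ whose first row is $(0,\dots,0,k,1)$ (entry $k$ in the second-to-last column, entry $1$ in the last column), whose entries directly below the main diagonal are $1$, and whose other entries are $0$; it satisfies $\det\beta(k)=\pm1$.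 For $s\geq 1$ put $\beta^{(s)}(k_1,\dots,k_s):=\beta(k_1)\cdots\beta(k_s)=((B^{(s)}_{ij}))_{0\leq i,j\leq n}$, with $\beta^{(0)}$ the identity matrix. Its columns are written as \begin{equation*} \beta^{(s)}=\begin{pmatrix} B_0^{(s-n+1)} & \dots & B_0^{(s-1)} & B_0^{(s)} & B_0^{(s-n)} \\ \vdots & & & & \vdots\\ B_n^{(s-n+1)} & \dots & B_n^{(s-1)} & B_n^{(s)} & B_n^{(s-n)} \end{pmatrix}, \end{equation*} so $B_i^{(s)}$ is the entry in row $i$ and second-to-last column of $\beta^{(s)}$, and $B_i^{(s+1)}=k_{s+1}B_i^{(s-n+1)}+B_i^{(s-n)}$ for $i=0,\dots,n$. If $y=S^sx$ then $x_i=\frac{B_i^{(s-n+1)}+y_1B_i^{(s-n+2)}+\dots+y_{n-1}B_i^{(s)}+y_nB_i^{(s-n)}}{B_0^{(s-n+1)}+y_1B_0^{(s-n+2)}+\dots+y_{n-1}B_0^{(s)}+y_nB_0^{(s-n)}}$, $1\leq i\leq n$. *)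

(* Defs.v *)
From HB Require Import structures.
From mathcomp Require Import all_boot all_order all_algebra.
From mathcomp Require Import all_classical all_reals all_analysis.
Set Implicit Arguments. Unset Strict Implicit. Unset Printing Implicit Defensive.
Import Order.TTheory GRing.Theory Num.Theory.
Local Open Scope ring_scope.

Section Selmer.
Variable R : realType.
Variable n : nat.

(* A point (x_1,...,x_n) is a function 'I_n -> R; x i is x_{i+1}. *)
(* 0-based coordinate access: xcoord x j = x_{j+1} (0 when j >= n). *)
Definition xcoord (x : 'I_n -> R) (j : nat) : R := oapp x 0 (insub j).

Definition inB (x : 'I_n -> R) : Prop :=
  xcoord x 0 <= 1 /\ (forall j : nat, (j.+1 < n)%N -> xcoord x j.+1 <= xcoord x j)
  /\ 0 <= xcoord x n.-1.

Definition digit (x : 'I_n -> R) : nat := Num.truncn ((xcoord x n.-1)^-1).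

Definition selmer (x : 'I_n -> R) : 'I_n -> R := fun i =>
  if (i.+1 < n)%N then xcoord x i.+1 / xcoord x 0
  else (1 - (digit x)%:R * xcoord x n.-1) / xcoord x 0.

Definition beta (k : nat) : 'M[R]_(n.+1) :=
  \matrix_(i, j) if i == 0%N :> nat then
                   (if j == n.-1 :> nat then k%:R else if j == n :> nat then 1 else 0)
                 else (if i == j.+1 :> nat then 1 else 0).

Fixpoint betas (x : 'I_n -> R) (s : nat) : 'M[R]_(n.+1) :=
  match s with
  | 0 => 1%:M
  | s'.+1 => betas x s' *m beta (digit (iter s' selmer x))
  end.

End Selmer.

(* Main.v *)
Require Import Defs.
From HB Require Import structures.
From mathcomp Require Import all_boot all_order all_algebra.
From mathcomp Require Import all_classical all_reals all_analysis.
From mathcomp Require Import ring lra zify.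
Import Order.TTheory GRing.Theory Num.Theory.
Import numFieldNormedType.Exports.
Local Open Scope classical_set_scope.
Local Open Scope ring_scope.


Section Med.
Variable R : realType.
Variable N : nat.

Lemma sum_pos (w : 'I_N -> R) j : (forall i, 0 <= w i) -> 0 < w j -> 0 < \sum_i w i.
Proof.
move=> h0 hj; rewrite (bigD1 j) //=; apply: ltr_pwDl => //.
by apply: sumr_ge0 => i _.
Qed.

Lemma term_le_sum (w : 'I_N -> R) j : (forall i, 0 <= w i) -> w j <= \sum_i w i.
Proof.
move=> h0; rewrite (bigD1 j) //= lerDl.
by apply: sumr_ge0 => i _.
Qed.

Lemma mediant (w a0 ar : 'I_N -> R) lo hi :
  (forall j, 0 <= w j) -> (forall j, 0 < a0 j) -> (exists j, 0 < w j) ->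
  (forall j, lo <= ar j / a0 j <= hi) ->
  lo <= (\sum_j ar j * w j) / (\sum_j a0 j * w j) <= hi.
Proof.
move=> hw ha [j hj] hr.
have W : 0 < \sum_j a0 j * w j.
  apply: (@sum_pos _ j) => [i|]; [exact: mulr_ge0 (ltW (ha i)) (hw i)|exact: mulr_gt0].
have e : forall i, ar i = (ar i / a0 i) * a0 i.
  by move=> i; rewrite divfK // gt_eqF.
apply/andP; split.
  rewrite ler_pdivlMr // mulr_sumr; apply: ler_sum => i _.
  rewrite (e i) -mulrA; apply: ler_wpM2r; first exact: mulr_ge0 (ltW (ha i)) (hw i).
  by case/andP: (hr i).
rewrite ler_pdivrMr // mulr_sumr; apply: ler_sum => i _.
rewrite (e i) -mulrA; apply: ler_wpM2r; first exact: mulr_ge0 (ltW (ha i)) (hw i).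
by case/andP: (hr i).
Qed.

Lemma num_contr (W1 W2 M1 M2 N2 C d a b : R) :
  0 < W1 -> 0 < W2 -> 1 <= C -> a * W1 = M1 -> b * W2 = N2 ->
  M2 <= M1 * C -> W1 <= C * W2 -> 0 <= M2 -> 0 <= N2 ->
  M2 + N2 = d * W2 -> d / (C * C) <= a + b.
Proof.
move=> hW1 hW2 hC ha hb hM hW hM2 hN2 hd.
have C0 : 0 < C by exact: lt_le_trans ltr01 hC.
have a0 : 0 <= a.
  have : 0 <= M1 by rewrite -(pmulr_lge0 _ C0); exact: le_trans hM.
  by rewrite -ha pmulr_lge0.
have CC : 0 < C * C by rewrite mulr_gt0.
rewrite ler_pdivrMr //.
have h1 : C * M1 <= a * (C * C) * W2.
  have := ler_wpM2l (mulr_ge0 (ltW C0) a0) hW.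
  rewrite -ha; move=> h; apply: (le_trans _ (le_trans h _)); rewrite le_eqVlt; apply/orP; left; apply/eqP; ring.
have h2 : N2 <= b * (C * C) * W2.
  have b0 : 0 <= b by rewrite -(pmulr_lge0 _ hW2) hb.
  have : 1 <= C * C by rewrite -[1]mulr1 ler_pM.
  move=> h; rewrite -hb; have := ler_wpM2l (mulr_ge0 b0 (ltW hW2)) h.
  rewrite mulr1 => h'; apply: (le_trans h'); rewrite le_eqVlt; apply/orP; left; apply/eqP; ring.
nra.
Qed.

Lemma sum_lin (u v q : 'I_N -> R) (c1 c2 : R) :
  \sum_j (c1 * u j + c2 * v j) * q j = c1 * \sum_j u j * q j + c2 * \sum_j v j * q j.
Proof.
rewrite !mulr_sumr -big_split /=; apply: eq_bigr => j _; ring.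
Qed.

Lemma contr (j0 : 'I_N) (a0 ar q1 q2 : 'I_N -> R) lo hi C :
  (forall j, 0 < a0 j) -> (forall j, lo <= ar j / a0 j <= hi) ->
  (forall j, 0 < q1 j) -> (forall j, 0 < q2 j) ->
  (forall j, q1 j <= C * q2 j) -> (forall j, q2 j <= C * q1 j) ->
  (\sum_j ar j * q1 j) / (\sum_j a0 j * q1 j)
   - (\sum_j ar j * q2 j) / (\sum_j a0 j * q2 j) <= (hi - lo) - (hi - lo) / (C * C).
Proof.
move=> ha hr hq1 hq2 hC1 hC2.
have hC : 1 <= C.
  have := hC1 j0; have := hC2 j0; have := hq1 j0; have := hq2 j0. nra.
have W1 : 0 < \sum_j a0 j * q1 j.
  apply: (@sum_pos _ j0) => [i|]; [exact: mulr_ge0 (ltW (ha i)) (ltW (hq1 i))|exact: mulr_gt0].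
have W2 : 0 < \sum_j a0 j * q2 j.
  apply: (@sum_pos _ j0) => [i|]; [exact: mulr_ge0 (ltW (ha i)) (ltW (hq2 i))|exact: mulr_gt0].
have hi0 : forall j, 0 <= hi * a0 j - ar j.
  move=> j; case/andP: (hr j) => _; rewrite ler_pdivrMr // subr_ge0 mulrC //.
have lo0 : forall j, 0 <= ar j - lo * a0 j.
  move=> j; case/andP: (hr j); rewrite ler_pdivlMr // subr_ge0 mulrC //.
set S1 := \sum_j ar j * q1 j; set S2 := \sum_j ar j * q2 j.
set V1 := \sum_j a0 j * q1 j; set V2 := \sum_j a0 j * q2 j.
have key := @num_contr V1 V2 (\sum_j (hi * a0 j + (-1) * ar j) * q1 j)
  (\sum_j (hi * a0 j + (-1) * ar j) * q2 j) (\sum_j ((-lo) * a0 j + 1 * ar j) * q2 j)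
  C (hi - lo) (hi - S1 / V1) (S2 / V2 - lo) W1 W2 hC.
rewrite !sum_lin -/S1 -/S2 -/V1 -/V2 in key.
have := key; clear key; move=> key.
suff : (hi - lo) / (C * C) <= hi - S1 / V1 + (S2 / V2 - lo) by lra.
apply: key.
- rewrite mulrBl divfK ?gt_eqF //; ring.
- rewrite mulrBl divfK ?gt_eqF //; ring.
  rewrite /S2 /V2 /S1 /V1 -2!sum_lin mulr_suml; apply: ler_sum => j _.
  rewrite -mulrA; apply: ler_wpM2l; first by have := hi0 j; lra.
  by rewrite mulrC.
- rewrite /V1 /V2 mulr_sumr; apply: ler_sum => j _.
  rewrite mulrCA; apply: ler_wpM2l; [exact: ltW|exact: hC1].
- rewrite /S2 /V2 -sum_lin; apply: sumr_ge0 => j _; apply: mulr_ge0; last exact: ltW.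
  by have := hi0 j; lra.
- rewrite /S2 /V2 -sum_lin; apply: sumr_ge0 => j _; apply: mulr_ge0; last exact: ltW.
  by have := lo0 j; lra.
- rewrite -/V2; ring.
Qed.

End Med.


Section S2.
Variable R : realType.
Variable n : nat.
Hypothesis n0 : (0 < n)%N.

Lemma xcoordE (x : 'I_n -> R) (i : 'I_n) : xcoord x i = x i.
Proof. by rewrite /xcoord valK. Qed.

Lemma xcoordE' (x : 'I_n -> R) j (hj : (j < n)%N) : xcoord x j = x (Ordinal hj).
Proof. by rewrite -xcoordE. Qed.

Lemma xcoord_selmer (y : 'I_n -> R) j : (j < n)%N ->
  xcoord (selmer y) j = if (j.+1 < n)%N then xcoord y j.+1 / xcoord y 0
     else (1 - (digit y)%:R * xcoord y n.-1) / xcoord y 0.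
Proof. by move=> hj; rewrite (xcoordE' _ _ hj) /selmer. Qed.

Lemma chain (y : 'I_n -> R) : inB y -> forall j, (j < n)%N -> xcoord y n.-1 <= xcoord y j.
Proof.
case=> _ [hm _].
suff H : forall d, (d < n)%N -> xcoord y n.-1 <= xcoord y (n.-1 - d).
  move=> j hj; have := H (n.-1 - j)%N; rewrite (_ : (n.-1 - (n.-1 - j) = j)%N); last by lia.
  apply; lia.
elim=> [|d IH] hd; first by rewrite subn0.
apply: (le_trans (IH _)); first lia.
have := hm (n.-1 - d.+1)%N; rewrite (_ : (n.-1 - d.+1).+1 = n.-1 - d)%N; last by lia.
apply; lia.
Qed.

Section Y.
Variable y : 'I_n -> R.
Hypothesis hy : inB y.
Hypothesis hpos : 0 < xcoord y n.-1.

Let yl := xcoord y n.-1.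
Let y0 := xcoord y 0.

Lemma y0_pos : 0 < xcoord y 0.
Proof. exact: lt_le_trans hpos (chain _ hy _ n0). Qed.

Lemma digit_facts : (digit y)%:R * xcoord y n.-1 <= 1 /\
   1 - (digit y)%:R * xcoord y n.-1 < xcoord y n.-1.
Proof.
have hi : 0 < (xcoord y n.-1)^-1 by rewrite invr_gt0.
have := truncn_itv (ltW hi).
rewrite /digit; set k := Num.truncn _; case/andP => h1 h2; split.
  by rewrite -ler_pdivlMr // div1r.
have : 1 < k.+1%:R * xcoord y n.-1 by rewrite -ltr_pdivrMr // div1r.
rewrite -addn1 natrD; lra.
Qed.

Lemma digit_ge1 : (1 <= digit y)%N.
Proof.
rewrite /digit truncn_gt0 invf_ge1 //.
by apply: (le_trans (chain _ hy _ n0)); case: hy.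
Qed.

Lemma inB_selmer : inB (selmer y).
Proof.
have y00 := y0_pos.
have [d1 d2] := digit_facts.
case: (hy) => hy1 [hy2 hy3].
split; [|split].
- rewrite xcoord_selmer //; case: ifP => h.
    by rewrite ler_pdivrMr // mul1r; exact: hy2 0%N h.
  rewrite ler_pdivrMr // mul1r.
  have e : n.-1 = 0%N by lia.
  by rewrite e in d2 *; lra.
- move=> j hj; rewrite !xcoord_selmer //; last lia.
  rewrite hj; case: ifP => h.
    by rewrite ler_pdivrMr // divfK ?gt_eqF //; exact: hy2.
  have e : j.+1 = n.-1 by lia.
  by rewrite ler_pdivrMr // divfK ?gt_eqF // e; lra.
- rewrite xcoord_selmer; last lia.
  have -> : (n.-1.+1 < n)%N = false by lia.
  by apply: divr_ge0; lra.
Qed.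

End Y.
End S2.


Section S3.
Variable R : realType.
Variable n : nat.
Hypothesis n0 : (0 < n)%N.

Lemma sum_two (a b : nat) (u v : R) (f : 'I_n.+1 -> R) : (a < n.+1)%N -> (b < n.+1)%N -> a != b ->
  \sum_(h < n.+1) (if h == a :> nat then u else if h == b :> nat then v else 0) * f h
   = u * f (inord a) + v * f (inord b).
Proof.
move=> ha hb hab; rewrite (bigD1 (inord a)) //= inordK // eqxx.
rewrite (bigD1 (inord b)) /=; last by apply/eqP => /(congr1 val) /=; rewrite !inordK //; apply/eqP; rewrite eq_sym.
rewrite inordK // eqxx (negbTE (_ : b != a)) 1?eq_sym // big1 ?addr0 //.
move=> h /andP [/eqP h1 /eqP h2].
case: eqP => [e|_]; first by exfalso; apply: h1; apply/val_inj; rewrite /= inordK.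
case: eqP => [e|_]; first by exfalso; apply: h2; apply/val_inj; rewrite /= inordK.
by rewrite mul0r.
Qed.

Lemma sum_shift (r : nat) (f : 'I_n.+1 -> R) : (0 < r)%N -> (r < n.+1)%N ->
  \sum_(h < n.+1) (if r == h.+1 then 1 else 0) * f h = f (inord r.-1).
Proof.
move=> r0 hr; rewrite (bigD1 (inord r.-1)) //= inordK; last lia.
rewrite prednK // eqxx mul1r big1 ?addr0 //.
move=> h /eqP h1; case: eqP => [e|_]; last by rewrite mul0r.
by exfalso; apply: h1; apply/val_inj; rewrite /= inordK e //; lia.
Qed.

Definition cv (y : 'I_n -> R) : 'cV[R]_(n.+1) :=
  \col_(j < n.+1) (if val j == 0%N then 1 else xcoord y (val j).-1).

Lemma beta_ge0 k i j : 0 <= beta R n k i j.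
Proof. by rewrite mxE; repeat case: ifP => _ //. Qed.

Lemma beta_down k (b : nat) : (b < n)%N -> beta R n k (inord b.+1) (inord b) = 1.
Proof. move=> hb; rewrite mxE !inordK /= ?eqxx //; lia. Qed.

Lemma beta_0n k : beta R n k ord0 (inord n) = 1.
Proof.
rewrite mxE /= inordK // ifN_eq ?eqxx //; lia.
Qed.

Lemma beta_0n1 k : beta R n k ord0 (inord n.-1) = k%:R.
Proof. by rewrite mxE /= inordK ?eqxx //; lia. Qed.

Lemma beta_col k (b : 'I_n.+1) : exists c, 0 < beta R n k c b.
Proof.
case: (ltnP b n) => hb.
  exists (inord b.+1); have := @beta_down k b hb.
  by rewrite (_ : inord (val b) = b) ?inord_val // => ->.
exists ord0; have e : b = inord n by apply: val_inj; rewrite /= inordK //; have := ltn_ord b; lia.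
by rewrite e beta_0n.
Qed.

Lemma beta_row k (a : 'I_n.+1) : exists c, 0 < beta R n k a c.
Proof.
case: (posnP a) => ha.
  exists (inord n); have e : a = ord0 by apply: val_inj.
  by rewrite e beta_0n.
exists (inord a.-1); have h : (a.-1 < n)%N by have := ltn_ord a; lia.
have := @beta_down k _ h; rewrite prednK // inord_val => -> //.
Qed.

Lemma mulmx_pos (A B : 'M[R]_(n.+1)) a b c :
  (forall i j, 0 <= A i j) -> (forall i j, 0 <= B i j) ->
  0 < A a c -> 0 < B c b -> 0 < (A *m B) a b.
Proof.
move=> hA hB h1 h2; rewrite mxE (bigD1 c) //=; apply: ltr_pwDl; first exact: mulr_gt0.
by apply: sumr_ge0 => i _; apply: mulr_ge0.
Qed.

Lemma mulmx_ge0 (A B : 'M[R]_(n.+1)) :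
  (forall i j, 0 <= A i j) -> (forall i j, 0 <= B i j) -> forall i j, 0 <= (A *m B) i j.
Proof. by move=> hA hB i j; rewrite mxE; apply: sumr_ge0 => h _; apply: mulr_ge0. Qed.

Lemma cv_step (y : 'I_n -> R) : 0 < xcoord y 0 ->
  cv y = xcoord y 0 *: (beta R n (digit y) *m cv (selmer y)).
Proof.
move=> y0; apply/matrixP => r z; rewrite !mxE.
under eq_bigr do rewrite !mxE.
have y0n : xcoord y 0 != 0 by rewrite gt_eqF.
case: (posnP r) => hr.
  rewrite sum_two; [|lia|lia|apply/eqP; lia].
  rewrite /= !inordK; try lia.
  rewrite (ifN_eq _ _ (_ : n != 0%N)); last lia.
  rewrite (xcoord_selmer _ _ _ n.-1); last lia.
  rewrite (_ : (n.-1.+1 < n)%N = false); last lia.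
  case: (eqVneq n.-1 0%N) => e.
    by rewrite e /=; field.
  rewrite /= xcoord_selmer; last lia.
  rewrite (_ : (n.-1.-1.+1 < n)%N = true); last lia.
  rewrite (_ : n.-1.-1.+1 = n.-1); last lia.
  by field.
rewrite sum_shift ?ltn_ord //.
rewrite /= inordK; last by have := ltn_ord r; lia.
case: (eqVneq r.-1 0%N) => e.
  by rewrite e /= mulr1.
rewrite /= xcoord_selmer; last by have := ltn_ord r; lia.
rewrite (_ : (r.-1.-1.+1 < n)%N = true); last by have := ltn_ord r; lia.
rewrite (_ : r.-1.-1.+1 = r.-1); last lia.
by field.
Qed.

End S3.

Arguments mulmx_pos {R n A B a b c}.
Arguments cv {R n}.
Arguments term_le_sum {R N} w j.
Arguments sum_pos {R N} w j.
Arguments y0_pos {R n} n0 {y}.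
Arguments cv_step {R n} n0 {y}.
Arguments chain {R n} n0 {y}.
Arguments beta_row {R n} n0 k a.
Arguments beta_col {R n} n0 k b.
Arguments mediant {R N w a0 ar lo hi}.
Arguments contr {R N} j0 {a0 ar q1 q2 lo hi C}.

Section S4.
Variable R : realType.
Variable n : nat.
Hypothesis n0 : (0 < n)%N.
Variable x : 'I_n -> R.
Hypothesis hx : inB x.
Hypothesis hp : forall i : nat, 0 < xcoord (iter i (@selmer R n) x) n.-1.

Definition yy s := iter s (@selmer R n) x.

Lemma inB_iter s : inB (yy s).
Proof.
elim: s => [|s IH] //=; exact: inB_selmer n0 _ IH (hp s).
Qed.

Lemma digit_pos s : (1 <= digit (yy s))%N.
Proof. exact: digit_ge1 n0 _ (inB_iter s) (hp s). Qed.

Fixpoint prodb s t : 'M[R]_(n.+1) :=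
  match t with 0 => 1%:M | t'.+1 => prodb s t' *m beta R n (digit (yy (s + t'))) end.

Lemma betas_add s t : betas x (s + t) = betas x s *m prodb s t.
Proof.
elim: t => [|t IH]; first by rewrite addn0 mulmx1.
by rewrite addnS /= IH mulmxA.
Qed.

Lemma id_ge0 i j : 0 <= (1%:M : 'M[R]_(n.+1)) i j.
Proof. by rewrite mxE; case: eqP. Qed.

Lemma prodb_ge0 s t i j : 0 <= prodb s t i j.
Proof.
elim: t i j => [|t IH] i j /=; first exact: id_ge0.
by apply: mulmx_ge0 => // ? ?; apply: beta_ge0.
Qed.

Lemma betas_ge0 s i j : 0 <= betas x s i j.
Proof. by rewrite -[s]add0n betas_add mul1mx; exact: prodb_ge0. Qed.

Section Walk.
Variable s : nat.
Definition pos t a b := 0 < prodb s t (inord a) (inord b).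

Lemma W0 a : (a <= n)%N -> pos 0 a a.
Proof. by move=> ha; rewrite /pos /= mxE eqxx ltr01. Qed.

Lemma Wdown t a b : (b < n)%N -> pos t a b.+1 -> pos t.+1 a b.
Proof.
move=> hb h; rewrite /pos /=; apply: (mulmx_pos (c := inord b.+1)) => //.
- exact: prodb_ge0.
- by move=> ? ?; apply: beta_ge0.
- by rewrite beta_down.
Qed.

Lemma Wn t a : pos t a 0 -> pos t.+1 a n.
Proof.
move=> h; rewrite /pos /=; apply: (mulmx_pos (c := inord 0)) => //.
- exact: prodb_ge0.
- by move=> ? ?; apply: beta_ge0.
- by rewrite (_ : inord 0 = ord0) ?beta_0n //; apply: val_inj; rewrite /= inordK.
Qed.

Lemma Wn1 t a : pos t a 0 -> pos t.+1 a n.-1.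
Proof.
move=> h; rewrite /pos /=; apply: (mulmx_pos (c := inord 0)) => //.
- exact: prodb_ge0.
- by move=> ? ?; apply: beta_ge0.
- rewrite (_ : inord 0 = ord0) ?beta_0n1 //; last by apply: val_inj; rewrite /= inordK.
  by rewrite ltr0n; exact: digit_pos.
Qed.

Lemma Wdowns t a b d : (b <= n)%N -> (d <= b)%N -> pos t a b -> pos (t + d) a (b - d).
Proof.
move=> hb; elim: d => [|d IH] hd h; first by rewrite addn0 subn0.
rewrite addnS; apply: Wdown; first lia.
by rewrite (_ : (b - d.+1).+1 = b - d)%N; [apply: IH => //; lia|lia].
Qed.

Arguments Wdowns {t a b d}.
Arguments Wn {t a}.
Arguments Wn1 {t a}.
Arguments Wdown {t a b}.

Lemma Wloop t a : pos t a 0 -> pos (t + n) a 0 /\ pos (t + n.+1) a 0.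
Proof.
move=> h; split.
  have := Wdowns (t := t.+1) (a := a) (d := n.-1) (leq_pred _) (leqnn _) (Wn1 h).
  by rewrite subnn (_ : (t.+1 + n.-1 = t + n)%N) //; lia.
have := Wdowns (t := t.+1) (a := a) (d := n) (leqnn _) (leqnn _) (Wn h).
by rewrite subnn (_ : (t.+1 + n = t + n.+1)%N) //; lia.
Qed.

Arguments Wloop {t a}.

Lemma Wloops t a u v : pos t a 0 -> pos (t + u * n + v * n.+1) a 0.
Proof.
move=> h; elim: v => [|v IHv].
  rewrite mul0n addn0; elim: u => [|u IHu]; first by rewrite mul0n addn0.
  rewrite (_ : (t + u.+1 * n = t + u * n + n)%N); last by rewrite mulSn; lia.
  by case: (Wloop IHu).
rewrite (_ : (t + u * n + v.+1 * n.+1 = t + u * n + v * n.+1 + n.+1)%N); last by rewrite mulSn; lia.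
by case: (Wloop IHv).
Qed.

Arguments Wloops {t a} u v.

Lemma Wall T (a b : 'I_n.+1) : (n * n + n + 1 <= T)%N -> 0 < prodb s T a b.
Proof.
move=> hT.
have ha := ltn_ord a; have hb := ltn_ord b.
have h0 : pos a a 0.
  by have := Wdowns (t := 0) (d := a) (a := a) (b := a) (ltnSE ha) (leqnn _) (W0 _ (ltnSE ha)); rewrite subnn.
set M := (T - a - (n.+1 - b))%N.
have hM : (n * n.-1 <= M)%N by rewrite /M; nia.
have e := divn_eq M n; have hr := ltn_pmod M n0.
set q := (M %/ n)%N in e; set r := (M %% n)%N in e hr.
have hrq : (r <= q)%N by nia.
have := Wloops (q - r) r h0.
rewrite (_ : (a + (q - r) * n + r * n.+1 = a + M)%N); last by nia.
move=> h1; have := Wn h1.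
move=> h2; have := Wdowns (d := n - b) (leqnn _) (leq_subr _ _) h2.
rewrite (_ : ((a + M).+1 + (n - b) = T)%N); last by rewrite /M; nia.
rewrite (_ : (n - (n - b) = b)%N); last lia.
by rewrite /pos !inord_val.
Qed.
End Walk.


Lemma yy_S s : yy s.+1 = selmer (yy s).
Proof. by []. Qed.

Lemma cv_rel s : exists l, 0 < l /\ cv x = l *: (betas x s *m cv (yy s)).
Proof.
elim: s => [|s [l [hl e]]]; first by exists 1; rewrite ltr01 /= mul1mx scale1r.
have y0 := y0_pos n0 (inB_iter s) (hp s).
exists (l * xcoord (yy s) 0); split; first exact: mulr_gt0.
rewrite e (cv_step n0 y0) -yy_S /= -scalemxAr scalerA mulmxA //.
Qed.

Lemma cv0 (y : 'I_n -> R) : cv y ord0 ord0 = 1.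
Proof. by rewrite mxE. Qed.

Lemma cvl (y : 'I_n -> R) (i : 'I_n) : cv y (lift ord0 i) ord0 = y i.
Proof. by rewrite mxE /= xcoordE. Qed.

Lemma cv_ge0 s j : 0 <= cv (yy s) j ord0.
Proof.
rewrite mxE; case: ifP => // /negbT h.
have hj : (j.-1 < n)%N by have := ltn_ord j; lia.
apply: le_trans (ltW (hp s)) _; have := chain n0 (inB_iter s) _ hj; exact.
Qed.

Lemma x_ratio s (i : 'I_n) : x i =
  (\sum_g betas x s (lift ord0 i) g * cv (yy s) g ord0) /
  (\sum_g betas x s ord0 g * cv (yy s) g ord0).
Proof.
have [l [hl e]] := cv_rel s.
have e1 := congr1 (fun M : 'M[R]_(n.+1,1) => M (lift ord0 i) ord0) e.
have e0 := congr1 (fun M : 'M[R]_(n.+1,1) => M ord0 ord0) e.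
rewrite /= cvl !mxE in e1; rewrite /= cv0 !mxE in e0.
have l0 : l != 0 by rewrite gt_eqF.
have S0 : \sum_g betas x s ord0 g * cv (yy s) g ord0 = l^-1.
  by apply: (mulfI l0); rewrite -e0 mulfV.
by rewrite S0 e1 invrK mulrC.
Qed.

Lemma row0_some s : exists c, 0 < betas x s ord0 c.
Proof.
elim: s => [|s [c hc]]; first by exists ord0; rewrite /= mxE eqxx ltr01.
have [d hd] := @beta_row R n n0 (digit (yy s)) c.
exists d; rewrite /=; apply: (@mulmx_pos R n _ _ ord0 d c) => //.
- by move=> ? ?; apply: betas_ge0.
- by move=> ? ?; apply: beta_ge0.
Qed.

Definition T0 := (n * n + n + 1)%N.

Lemma row0_pos s : (T0 <= s)%N -> forall g, 0 < betas x s ord0 g.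
Proof.
move=> hs g; rewrite (_ : s = (s - T0) + T0)%N; last lia.
rewrite betas_add; have [c hc] := row0_some (s - T0).
apply: (mulmx_pos (c := c)) => //.
- by move=> ? ?; apply: betas_ge0.
- by move=> ? ?; apply: prodb_ge0.
- exact: Wall.
Qed.

Definition rho s (i : 'I_n) (g : 'I_n.+1) := betas x s (lift ord0 i) g / betas x s ord0 g.

Definition amin s i := [arg min_(g < ord0) rho s i g]%O.
Definition amax s i := [arg max_(g > ord0) rho s i g]%O.

Lemma amin_le s i g : rho s i (amin s i) <= rho s i g.
Proof. by rewrite /amin; case: arg_minP => // a _ h; exact: h. Qed.

Lemma amax_ge s i g : rho s i g <= rho s i (amax s i).
Proof. by rewrite /amax; case: arg_maxP => // a _ h; exact: h. Qed.

Definition diam s i := rho s i (amax s i) - rho s i (amin s i).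

Lemma rho_stay s i lo hi : (T0 <= s)%N -> (forall g, lo <= rho s i g <= hi) ->
  forall t g, lo <= rho (s + t) i g <= hi.
Proof.
move=> hs h0; elim => [|t IH] g; first by rewrite addn0.
rewrite /rho addnS /= !mxE.
apply: mediant.
- by move=> j; apply: beta_ge0.
- by move=> j; apply: row0_pos; lia.
- exact: (@beta_col R n n0).
- exact: IH.
Qed.

Lemma x_close s i t g : (T0 <= s)%N -> `|x i - rho (s + t) i g| <= diam s i.
Proof.
move=> hs.
have hI : forall g, rho s i (amin s i) <= rho s i g <= rho s i (amax s i).
  by move=> g'; rewrite amin_le amax_ge.
have h1 := @rho_stay s i _ _ hs hI t g.
have h2 : rho s i (amin s i) <= x i <= rho s i (amax s i).
  rewrite (x_ratio (s + t) i).
  apply: mediant.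
  - by move=> j; apply: cv_ge0.
  - by move=> j; apply: row0_pos; lia.
  - by exists ord0; rewrite cv0 ltr01.
  - exact: (@rho_stay s i _ _ hs hI t).
rewrite /diam; move: h1 h2 => /andP [h1 h1'] /andP [h2 h2'].
rewrite ler_norml; apply/andP; split; lra.
Qed.

Lemma diam_ge0 s i : 0 <= diam s i.
Proof. by rewrite /diam subr_ge0; apply: le_trans (amin_le s i ord0) (amax_ge s i ord0). Qed.

Section Per.
Variables m p : nat.
Hypothesis p0 : (0 < p)%N.
Hypothesis hper : iter (m + p) (@selmer R n) x = iter m (@selmer R n) x.

Lemma yy_per j u : yy (m + p * j + u) = yy (m + u).
Proof.
elim: j => [|j IH]; first by rewrite muln0 addn0.
rewrite /yy (_ : (m + p * j.+1 + u = (u + p * j) + (m + p))%N); last by rewrite mulnS; lia.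
rewrite iterD hper -iterD (_ : (u + p * j + m = m + p * j + u)%N); last lia.
exact: IH.
Qed.

Lemma prodb_per j t : prodb (m + p * j) t = prodb m t.
Proof.
elim: t => [|t IH] //=; rewrite IH; congr (_ *m beta R n (digit _)).
exact: yy_per.
Qed.

Definition L := (T0 * p)%N.
Definition Q := prodb m L.

Lemma TL : (T0 <= L)%N.
Proof. by rewrite /L leq_pmulr. Qed.

Lemma Q_pos a b : 0 < Q a b.
Proof. apply: Wall; have := TL; rewrite /T0 /L; lia. Qed.

Lemma betas_block j : betas x (m + L * j + L) = betas x (m + L * j) *m Q.
Proof.
rewrite betas_add /Q; congr (_ *m _).
by rewrite (_ : (L * j = p * (T0 * j))%N) ?prodb_per // /L; lia.
Qed.

Definition CQ := \sum_k \sum_g \sum_g' Q k g / Q k g'.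

Lemma Q_ratio k g g' : Q k g <= CQ * Q k g'.
Proof.
have hr : Q k g / Q k g' <= CQ.
  have nn : forall k g g', 0 <= Q k g / Q k g'.
    by move=> ? ? ?; apply: divr_ge0; apply: ltW; apply: Q_pos.
  have A1 := term_le_sum (fun g'0 => Q k g / Q k g'0) g' (fun _ => nn _ _ _).
  have A2 : \sum_g'0 Q k g / Q k g'0 <= \sum_g0 \sum_g'0 Q k g0 / Q k g'0.
    apply: (term_le_sum (fun g0 => \sum_g'0 Q k g0 / Q k g'0) g).
    by move=> ?; apply: sumr_ge0 => ? _; exact: nn.
  have A3 : \sum_g0 \sum_g'0 Q k g0 / Q k g'0 <= CQ.
    apply: (term_le_sum (fun k0 => \sum_g0 \sum_g'0 Q k0 g0 / Q k0 g'0) k).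
    by move=> ?; apply: sumr_ge0 => ? _; apply: sumr_ge0 => ? _; exact: nn.
  exact: le_trans A1 (le_trans A2 A3).
have := ler_wpM2r (ltW (Q_pos k g')) hr.
by rewrite divfK ?gt_eqF ?Q_pos.
Qed.

Lemma CQ_ge1 : 1 <= CQ.
Proof.
have := Q_ratio ord0 ord0 ord0; have := Q_pos ord0 ord0.
move=> h1 h2; rewrite -(ler_pM2r h1) mul1r; exact: h2.
Qed.

Definition qq := 1 - 1 / (CQ * CQ).

Lemma qq_facts : 0 <= qq /\ qq < 1.
Proof.
have h := CQ_ge1; have hC : 1 <= CQ * CQ by rewrite -[1]mulr1 ler_pM.
have hp' : 0 < 1 / (CQ * CQ) by rewrite divr_gt0 // (lt_le_trans ltr01 hC).
have : 1 / (CQ * CQ) <= 1 by rewrite ler_pdivrMr ?mul1r // (lt_le_trans ltr01 hC).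
rewrite /qq; split; lra.
Qed.

Lemma diam_contr j i : (T0 <= m + L * j)%N -> diam (m + L * j + L) i <= qq * diam (m + L * j) i.
Proof.
move=> hs; set s := (m + L * j)%N.
rewrite {1}/diam /rho betas_block !mxE.
apply: le_trans.
  apply: (contr ord0 (lo := rho s i (amin s i)) (hi := rho s i (amax s i))).
  - by move=> k; apply: row0_pos.
  - by move=> k; rewrite amin_le amax_ge.
  - by move=> k; apply: Q_pos.
  - by move=> k; apply: Q_pos.
  - by move=> k; apply: Q_ratio.
  - by move=> k; apply: Q_ratio.
rewrite /diam /qq; rewrite le_eqVlt; apply/orP; left; apply/eqP; rewrite !mul1r; ring.
Qed.

Definition sb j := (m + L * j.+1)%N.

Lemma sb_T0 j : (T0 <= sb j)%N.
Proof. have := TL; rewrite /sb mulnS; lia. Qed.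

Lemma diam_sb j i : diam (sb j) i <= qq ^+ j * diam (sb 0) i.
Proof.
elim: j => [|j IH]; first by rewrite expr0 mul1r.
rewrite (_ : sb j.+1 = (m + L * j.+1 + L)%N); last by rewrite /sb (mulnS L j.+1); lia.
apply: le_trans (@diam_contr j.+1 i (sb_T0 j)) _.
rewrite exprS -mulrA; apply: ler_wpM2l => //; by case: qq_facts.
Qed.

Lemma conv i g : (fun s => rho s i g) @ \oo --> x i.
Proof.
apply/cvgrPdist_lt => e e0.
set D := diam (sb 0) i.
have D0 : 0 <= D := diam_ge0 _ _.
have [q0 q1] := qq_facts.
have hq : `|qq| < 1 by rewrite ger0_norm.
have := cvg_expr hq; move/cvgrPdist_lt => /(_ (e / (D + 1))).
have eD : 0 < e / (D + 1) by rewrite divr_gt0 // ltr_wpDl.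
move=> /(_ eD) [J _ HJ].
have hJ := HJ J (leqnn J); rewrite /= sub0r normrN ger0_norm ?exprn_ge0 // in hJ.
exists (sb J) => // s /= hs.
have := @x_close (sb J) i (s - sb J) g (sb_T0 J); rewrite subnKC //.
move=> h; apply: le_lt_trans h _.
apply: le_lt_trans (diam_sb J i) _.
have h1 : qq ^+ J * D <= e / (D + 1) * D by apply: ler_wpM2r => //; exact: ltW.
apply: le_lt_trans h1 _.
rewrite mulrAC ltr_pdivrMr ?ltr_wpDl //; nra.
Qed.
End Per.
End S4.

Theorem mainTheorem5 (R : realType) (n : nat) (x : 'I_n -> R) :
  (0 < n)%N ->
  inB x ->
  (forall i : nat, 0 < xcoord (iter i (@selmer R n) x) n.-1) ->
  (exists m p : nat, (0 < p)%N /\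
     iter (m + p) (@selmer R n) x = iter m (@selmer R n) x) ->
  (forall i : 'I_n,
     (fun s : nat => betas x s (lift ord0 i) (inord n.-1) / betas x s ord0 (inord n.-1))
       @ \oo --> x i)
  /\
  (forall (g : 'I_n.+1) (i : 'I_n),
     (fun s : nat => betas x s (lift ord0 i) g / betas x s ord0 g) @ \oo --> x i).
Proof.
move=> n0 hx hp [m [p [p0 hper]]].
have H := @conv R n n0 x hx hp m p p0 hper.
by split => [i|g i]; exact: H.
Qed.
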